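(* Let $(\vec s_i)_{i\in\mathbb N}$ be a strictly increasing sequence of oriented separations of a graph $G$ and $(P_i)_{i\in\mathbb N}$ a sequence of pre-tangles in $G$ satisfying (IM1) $\overleftarrow{s}_i\in P_i$ and $\vec s_i\in P_{i+1}$ for all $i$, and (IM2) for all $i<j$, every separation of minimal order among $s_i,\dots,s_{j-1}$ efficiently distinguishes $P_i$ and $P_j$. If $(|s_i|)_{i}$ cofinitely exceeds every integer, then there is a strictly increasing function $j:\mathbb N\to\mathbb N$ such that $(|s_{j(i)}|)_{i}$ is strictly increasing and the sequences $(\vec s_{j(i)})_{i}$ and $(P_{j(i)})_{i}$ still satisfy (IM1) and (IM2).
   Context: Notation: $s$ denotes a separation (an unordered pair $\{A,B\}$ of subsets of $V(G)$ with $A\cup B=V(G)$ and no edge between $A\setminus B$ and $B\setminus A$; order $|s|=|A\cap B|$), $\vec s,\overleftarrow{s}$ its two orientations; oriented separations are ordered by $(A,B)\le(C,D)$ iff $A\subseteq C$ and $B\supseteq D$. A set $O$ of oriented separations is consistent if there are no $(A,B),(C,D)\in O$ with $\{A,B\}\ne\{C,D\}$ and $(B,A)\le(C,D)$. A pre-tangle is a consistent set $P$ which, for some $k\in\mathbb N\cup\{\aleph_0\}$, contains exactly one orientation of every separation of order $<k$ and nothing else. A separation distinguishes two pre-tangles if both contain an orientation of it but different ones; efficiently if of minimum order among such. A sequence $(a_i)$ of integers cofinitely exceeds every integer if for every $k\in\mathbb N$ there is $I$ with $a_i\ge k$ for all $i\ge I$. *)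

(* Defs.v *)
(* Graphs may be infinite: vertex type V arbitrary, vertex
   subsets are predicates V -> Prop (equality of sets is Leibniz equality;
   with functional/propositional extensionality this is extensional). *)
From Stdlib Require Import List Arith.
Import ListNotations.

Set Implicit Arguments.
Section Seps.
Variable V : Type.
Variable adj : V -> V -> Prop.

Definition osep := ((V -> Prop) * (V -> Prop))%type.

Definition inv (s : osep) : osep := (snd s, fst s).

Definition is_sep (s : osep) : Prop :=
  (forall v, fst s v \/ snd s v) /\
  (forall x y, fst s x -> ~ snd s x -> snd s y -> ~ fst s y ->
     ~ adj x y /\ ~ adj y x).

Definition order_eq (s : osep) (n : nat) : Prop :=
  exists l : list V, NoDup l /\ length l = n /\
    (forall v, (fst s v /\ snd s v) <-> In v l).

Definition ole (r t : osep) : Prop :=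
  (forall v, fst r v -> fst t v) /\ (forall v, snd t v -> snd r v).

Definition olt (r t : osep) : Prop := ole r t /\ r <> t.

Definition same_sep (r t : osep) : Prop := t = r \/ t = inv r.

Definition consistent (O : osep -> Prop) : Prop :=
  ~ exists r t, O r /\ O t /\ ~ same_sep r t /\ ole (inv r) t.

(* order < k, where k : option nat, None standing for aleph_0 *)
Definition order_lt (s : osep) (k : option nat) : Prop :=
  match k with
  | Some k => exists n, order_eq s n /\ n < k
  | None => exists n, order_eq s n
  end.

Definition pretangle (P : osep -> Prop) : Prop :=
  consistent P /\
  exists k : option nat,
    (forall r, P r -> is_sep r /\ order_lt r k) /\
    (forall s, is_sep s -> order_lt s k ->
       (P s \/ P (inv s)) /\ (s <> inv s -> ~ (P s /\ P (inv s)))).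

Definition distinguishes (P Q : osep -> Prop) (s : osep) : Prop :=
  s <> inv s /\ ((P s /\ Q (inv s)) \/ (P (inv s) /\ Q s)).

Definition eff_distinguishes (P Q : osep -> Prop) (s : osep) : Prop :=
  distinguishes P Q s /\
  exists n, order_eq s n /\
    forall t m, distinguishes P Q t -> order_eq t m -> n <= m.

Definition IM1 (s : nat -> osep) (P : nat -> osep -> Prop) : Prop :=
  forall i, P i (inv (s i)) /\ P (S i) (s i).

Definition IM2 (s : nat -> osep) (P : nat -> osep -> Prop) : Prop :=
  forall i j l, i <= l < j ->
    (forall l' n n', i <= l' < j -> order_eq (s l) n -> order_eq (s l') n' ->
        n <= n') ->
    eff_distinguishes (P i) (P j) (s l).

Definition cofinitely_exceeds (s : nat -> osep) : Prop :=
  forall k : nat, exists I, forall i, I <= i ->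
    exists n, order_eq (s i) n /\ k <= n.

End Seps.

(* Main.v *)
Require Import Defs.
From Stdlib Require Import List Arith Lia Classical ClassicalEpsilon.

Lemma order_unique V (r : osep V) n m : order_eq r n -> order_eq r m -> n = m.
Proof.
  intros [l1 [N1 [L1 H1]]] [l2 [N2 [L2 H2]]].
  assert (length l1 <= length l2).
  { apply NoDup_incl_length; auto. intros v Hv. apply H2, H1, Hv. }
  assert (length l2 <= length l1).
  { apply NoDup_incl_length; auto. intros v Hv. apply H1, H2, Hv. }
  lia.
Qed.

Theorem mainTheorem16 (V : Type) (adj : V -> V -> Prop)
  (adj_sym : forall x y, adj x y -> adj y x)
  (adj_irrefl : forall x, ~ adj x x)
  (s : nat -> osep V) (P : nat -> osep V -> Prop)
  (s_sep : forall i, is_sep adj (s i))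
  (s_incr : forall i j, i < j -> olt (s i) (s j))
  (P_pt : forall i, pretangle adj (P i))
  (HIM1 : IM1 s P) (HIM2 : IM2 s P)
  (Hcof : cofinitely_exceeds s) :
  exists j : nat -> nat,
    (forall a b, a < b -> j a < j b) /\
    (forall a, exists n m, order_eq (s (j a)) n /\ order_eq (s (j (S a))) m /\ n < m) /\
    IM1 (fun a => s (j a)) (fun a => P (j a)) /\
    IM2 (fun a => s (j a)) (fun a => P (j a)).
Proof.
  assert (Hfin : forall i, exists n, order_eq (s i) n).
  { intro i. destruct (HIM1 i) as [_ H]. destruct (P_pt (S i)) as [_ [k [Hk _]]].
    destruct (Hk _ H) as [_ Ho]. destruct k; simpl in Ho;
      [destruct Ho as [n0 [Hn _]] | destruct Ho as [n0 Hn]]; eauto. }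
  set (f := fun i => proj1_sig (constructive_indefinite_description _ (Hfin i))).
  assert (Hf : forall i, order_eq (s i) (f i)).
  { intro i. unfold f. destruct (constructive_indefinite_description _ _); auto. }
  clearbody f.
  assert (Hfu : forall i n, order_eq (s i) n -> n = f i).
  { intros. eapply order_unique; eauto. }
  set (good := fun k => forall k', k < k' -> f k < f k').
  assert (Hgood : forall N, exists k, N <= k /\ good k).
  { intro N. apply NNPP. intro Hno.
    assert (Hstep : forall k, N <= k -> exists k', k < k' /\ f k' <= f k).
    { intros k Hk. apply NNPP. intro H2. apply Hno. exists k. split; auto.
      intros k' Hk'. destruct (Nat.lt_ge_cases (f k) (f k')) as [|Hge]; auto.
      exfalso; apply H2; eauto. }
    assert (Hit : forall t, exists k, N + t <= k /\ f k <= f N).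
    { induction t. exists N; split; lia.
      destruct IHt as [k [Hk1 Hk2]]. destruct (Hstep k ltac:(lia)) as [k' [Hk' Hk'']].
      exists k'; split; lia. }
    destruct (Hcof (S (f N))) as [I HI]. destruct (Hit I) as [k [Hk1 Hk2]].
    destruct (HI k ltac:(lia)) as [n [Hn Hle]]. rewrite (Hfu _ _ Hn) in Hle. lia. }
  set (g := fun N => proj1_sig (constructive_indefinite_description _ (Hgood N))).
  assert (Hg : forall N, N <= g N /\ good (g N)).
  { intro N. unfold g. destruct (constructive_indefinite_description _ _); auto. }
  clearbody g.
  set (j := fun a => nat_rect (fun _ => nat) (g 0) (fun _ x => g (S x)) a).
  assert (Hj0 : j 0 = g 0) by reflexivity.
  assert (HjS : forall a, j (S a) = g (S (j a))) by reflexivity.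
  clearbody j.
  assert (Hjs : forall a, j a < j (S a)).
  { intro a. rewrite HjS. destruct (Hg (S (j a))). lia. }
  assert (Hjm : forall a b, a < b -> j a < j b).
  { intros a b H. induction b. lia. specialize (Hjs b).
    destruct (Nat.eq_dec a b). subst; auto. assert (a < b) by lia. specialize (IHb H0). lia. }
  assert (Hjg : forall a, good (j a)).
  { intro a. destruct a. rewrite Hj0. apply Hg. rewrite HjS. apply Hg. }
  assert (Hch : forall a b, a < b -> f (j a) < f (j b)).
  { intros a b H. apply Hjg. auto. }
  assert (Hkey : forall a b, a < b -> eff_distinguishes (P (j a)) (P (j b)) (s (j a))).
  { intros a b H. pose proof (Hjm _ _ H). apply HIM2; [lia|].
    intros l' n n' [H1 H2] Hn Hn'. rewrite (Hfu _ _ Hn), (Hfu _ _ Hn').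
    destruct (Nat.eq_dec l' (j a)). subst; lia.
    assert (j a < l') by lia. specialize (Hjg a l' ltac:(lia)). lia. }
  exists j. split; [exact Hjm|]. split.
  { intro a. exists (f (j a)), (f (j (S a))). split; [auto|split; [auto|apply Hch; lia]]. }
  split.
  { intro a. cbv beta. split. apply HIM1.
    destruct (Hkey a (S a) ltac:(lia)) as [[Hneq [[A B]|[A B]]] _]; auto.
    exfalso. destruct (P_pt (j a)) as [_ [k [Hk1 Hk2]]].
    destruct (Hk1 _ A) as [Hs Ho]. destruct (Hk2 _ Hs Ho) as [_ Hu].
    apply (Hu Hneq); split; [exact A | apply HIM1]. }
  { intros a b l [Hal Hlb] Hmin. cbv beta in *.
    destruct (Nat.eq_dec l a). subst. apply Hkey. lia.
    exfalso. assert (a < l) by lia.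
    specialize (Hmin a (f (j l)) (f (j a)) ltac:(lia) (Hf _) (Hf _)).
    specialize (Hch a l H). lia. }
Qed.
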